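(* Let $\phi$ (with variables $A_1,\dots,A_n$), $\psi$ (with variables $B_1,\dots,B_m$) and $\chi$ (with variables $C_1,\dots,C_l$) be transformations between functors $\mathbb C^{\alpha}\to\mathbb C$ (for appropriate sign lists), each dinatural in all its variables. Then for every $i\in m$ and $j\in l$, $$(\phi\ast_i\psi)\ast_j\chi=\phi\ast_{j-1+i}(\psi\ast_j\chi),$$ i.e. both sides have the same domain functor, codomain functor and type (both having variables $C_1,\dots,C_{j-1},B_1,\dots,B_{i-1},A_1,\dots,A_n,B_{i+1},\dots,B_m,C_{j+1},\dots,C_l$) and the same components.
   Context: Notation: $k$ also denotes $\{1,\dots,k\}$; $\mathbb C^\alpha=\mathbb C^{\alpha_1}\times\cdots$ with $\mathbb C^+=\mathbb C$, $\mathbb C^-=\mathbb C^{op}$; for $\mathbf A=(A_1,\dots,A_n)$, $\sigma\colon k\to n$, $\mathbf A\sigma=(A_{\sigma1},\dots,A_{\sigma k})$; a morphism in a contravariant argument is read in $\mathbb C^{op}$. A transformation $\phi\colon F\to G$ ($F\colon\mathbb C^\alpha\to\mathbb C$, $G\colon\mathbb C^\beta\to\mathbb C$) of type $|\alpha|\xrightarrow{\sigma}n\xleftarrow{\tau}|\beta|$ is a family $\phi_{\mathbf A}\colon F(\mathbf A\sigma)\to G(\mathbf A\tau)$, $\mathbf A\in\mathrm{Ob}(\mathbb C)^n$. $\mathbf A[X,Y/i]\sigma$ is the tuple whose $j$-th entry is $X$ if $\sigma j=i,\alpha_j=-$, $Y$ if $\sigma j=i,\alpha_j=+$, $A_{\sigma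 j}$ (or $1_{A_{\sigma j}}$ for morphisms) otherwise; $\mathbf A[X/i]=\mathbf A[X,X/i]$. $\phi$ is dinatural in its $i$-th variable if for all $A_j$ ($j\ne i$) and $f\colon A\to B$: $G(\mathbf A[A,f/i]\tau)\circ\phi_{\mathbf A[A/i]}\circ F(\mathbf A[f,A/i]\sigma)=G(\mathbf A[f,B/i]\tau)\circ\phi_{\mathbf A[B/i]}\circ F(\mathbf A[B,f/i]\sigma)$. Horizontal composition: let $F\colon\mathbb C^\alpha\to\mathbb C$, $G\colon\mathbb C^\beta\to\mathbb C$, $H\colon\mathbb C^\gamma\to\mathbb C$, $K\colon\mathbb C^\delta\to\mathbb C$, $\phi\colon F\to G$ of type $|\alpha|\xrightarrow{\sigma}n\xleftarrow{\tau}|\beta|$ with variables $\mathbf A=(A_1,\dots,A_n)$, and $\psi\colon H\to K$ of type $|\gamma|\xrightarrow{\eta}m\xleftarrow{\theta}|\delta|$ with variables $\mathbf B=(B_1,\dots,B_m)$, dinatural in its $i$-th variable. $\phi\ast_i\psi$ has variables $(B_1,\dots,B_{i-1},A_1,\dots,A_n,B_{i+1},\dots,B_m)$. Its domain functor is obtained from $H$ by substituting into each argument position $u$ with $\eta u=i$ the functor $F$ if $\gamma_u=+$ and $G^{op}$ if $\gamma_u=-$ (other positions unchanged); its codomain from $K$ by substituting into each position $v$ with $\theta v=i$ the functor $G$ if $\delta_v=+$ and $F^{op}$ if $\delta_v=-$. In its type, an argument coming from the $j$-th argument of a copy of $F$ has variable $A_{\sigma j}$, from a copy of $G$ variable $A_{\tau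 j}$, and unchanged positions $u$ of $H$ (resp. $v$ of $K$) variable $B_{\eta u}$ (resp. $B_{\theta v}$). Its component at $\mathbf B[\mathbf A/i]$ is $K(\mathbf B[F(\mathbf A\sigma),\phi_{\mathbf A}/i]\theta)\circ\psi_{\mathbf B[F(\mathbf A\sigma)/i]}\circ H(\mathbf B[\phi_{\mathbf A},F(\mathbf A\sigma)/i]\eta)$. (By the result that $\phi\ast_i\psi$ is dinatural in every variable in which $\phi$ resp. $\psi$ is, both sides of the claim are defined.) *)

(* Defs.v *)
From mathcomp Require Import all_boot all_order.
From mathcomp Require Import zify.
From Stdlib Require Import FunctionalExtensionality.

Unset Printing Implicit Defensive.

Record category := Category {
  Ob : Type;
  Hom : Ob -> Ob -> Type;
  idm : forall a, Hom a a;
  comp : forall {a b c}, Hom b c -> Hom a b -> Hom a c;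
  comp_assoc : forall a b c d (h : Hom c d) (g : Hom b c) (f : Hom a b),
      comp h (comp g f) = comp (comp h g) f;
  comp_id_l : forall a b (f : Hom a b), comp (idm b) f = f;
  comp_id_r : forall a b (f : Hom a b), comp f (idm a) = f }.

Arguments Ob : clear implicits.
Arguments Hom {C} : rename.
Arguments idm {C} a : rename.
Arguments comp {C a b c} : rename.

Section MixedVariance.
Variable C : category.
Local Notation Ob := (Ob C).

(* A morphism of C^b (b = true : C, b = false : C^op) from x to y. *)
Definition vhom (b : bool) (x y : Ob) : Type := if b then Hom x y else Hom y x.

Definition vid (b : bool) (x : Ob) : vhom b x x :=
  match b return vhom b x x with true => idm x | false => idm x end.

(* composite "g after f" in C^b *)
Definition vcomp (b : bool) {x y z : Ob} : vhom b x y -> vhom b y z -> vhom b x z :=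
  match b return vhom b x y -> vhom b y z -> vhom b x z with
  | true => fun f g => comp g f
  | false => fun f g => comp f g
  end.

Definition vflip {b : bool} {x y : Ob} : vhom (~~ b) x y -> vhom b y x :=
  match b return vhom (~~ b) x y -> vhom b y x with
  | true => fun f => f | false => fun f => f end.

Definition vcast {b b' : bool} {x y : Ob} (e : b = b') (f : vhom b x y) : vhom b' x y :=
  match e in _ = b0 return vhom b0 x y with erefl => f end.

Definition castHom {x x' y y' : Ob} (e1 : x = x') (e2 : y = y') (f : Hom x y) : Hom x' y' :=
  match e1 in _ = x0 return Hom x0 y' with
  | erefl => match e2 in _ = y0 return Hom x y0 with erefl => f end end.

(* Functors C^alpha -> C.  [ar_n] = |alpha|, [ar u] = alpha_u          *)
(* (true = +, false = -); argument tuples are 'I_|alpha| -> Ob.        *)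

Record mfun := MFun {
  ar_n : nat;
  ar : 'I_ar_n -> bool;
  fo : ('I_ar_n -> Ob) -> Ob;
  fm : forall {X Y : 'I_ar_n -> Ob},
         (forall u, vhom (ar u) (X u) (Y u)) -> Hom (fo X) (fo Y) }.

Arguments ar_n : clear implicits.
Arguments ar : clear implicits.
Arguments fo : clear implicits.
Arguments fm F {X Y} : rename.

Definition is_functor (F : mfun) : Prop :=
  (forall X, fm F (fun u => vid (ar F u) (X u)) = idm (fo F X)) /\
  (forall (X Y Z : 'I_(ar_n F) -> Ob)
          (f : forall u, vhom (ar F u) (X u) (Y u))
          (g : forall u, vhom (ar F u) (Y u) (Z u)),
      fm F (fun u => vcomp (ar F u) (f u) (g u)) = comp (fm F g) (fm F f)).

(* Transformations phi : F -> G of type |alpha| -sigma-> n <-tau- |beta| *)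
Record trans := Trans {
  tdom : mfun;
  tcod : mfun;
  tn : nat;
  tsig : 'I_(ar_n tdom) -> 'I_tn;
  ttau : 'I_(ar_n tcod) -> 'I_tn;
  tcomp : forall A : 'I_tn -> Ob,
      Hom (fo tdom (fun u => A (tsig u))) (fo tcod (fun u => A (ttau u))) }.

Arguments tdom : clear implicits.
Arguments tcod : clear implicits.
Arguments tn : clear implicits.
Arguments tsig : clear implicits.
Arguments ttau : clear implicits.
Arguments tcomp : clear implicits.

(* [pc X Y] : the object put in a slot of variance b (X for -, Y for +) *)
Definition pc (X Y : Ob) : bool -> Ob := fun s => if s then Y else X.

(* A[p/i]sigma : the j-th entry is p(alpha_j) if sigma j = i, else A_{sigma j} *)
Definition obs {k n} (al : 'I_k -> bool) (sg : 'I_k -> 'I_n) (A : 'I_n -> Ob)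
    (i : 'I_n) (p : bool -> Ob) : 'I_k -> Ob :=
  fun j => if sg j == i then p (al j) else A (sg j).

(* the morphism tuple which is [fneg] in the contravariant slots with
   variable i, [fpos] in the covariant slots with variable i, and identities
   elsewhere; e.g. A[f,a/i]sigma = mtup (pc b a) (fun _ => a) f (idm a). *)
Definition mtup {k n} (al : 'I_k -> bool) (sg : 'I_k -> 'I_n) (A : 'I_n -> Ob)
    (i : 'I_n) (p1 p2 : bool -> Ob) (fneg : Hom (p2 false) (p1 false))
    (fpos : Hom (p1 true) (p2 true)) :
    forall j, vhom (al j) (obs al sg A i p1 j) (obs al sg A i p2 j) :=
  fun j =>
  match sg j == i as c return
        vhom (al j) (if c then p1 (al j) else A (sg j))
                    (if c then p2 (al j) else A (sg j)) with
  | true => match al j as b return vhom b (p1 b) (p2 b) with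
            | true => fpos | false => fneg end
  | false => vid (al j) (A (sg j))
  end.


Definition subst1 {n} (A : 'I_n -> Ob) (i : 'I_n) (a : Ob) : 'I_n -> Ob :=
  fun v => if v == i then a else A v.

Definition dinatural_in (phi : trans) (i : 'I_(tn phi)) : Prop :=
  forall (A : 'I_(tn phi) -> Ob) (a b : Ob) (f : Hom a b),
    comp (fm (tcod phi) (mtup (ar (tcod phi)) (ttau phi) A i (fun _ => a) (pc a b) (idm a) f))
      (comp (tcomp phi (subst1 A i a))
            (fm (tdom phi) (mtup (ar (tdom phi)) (tsig phi) A i (pc b a) (fun _ => a) f (idm a))))
    =
    comp (fm (tcod phi) (mtup (ar (tcod phi)) (ttau phi) A i (fun _ => b) (pc a b) f (idm b)))
      (comp (tcomp phi (subst1 A i b))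
            (fm (tdom phi) (mtup (ar (tdom phi)) (tsig phi) A i (pc b a) (fun _ => b) (idm b) f))).


Definition dinatural (phi : trans) : Prop := forall i, dinatural_in phi i.

(* At a position u with P u: Fp if alpha_u = +, Fn^op if alpha_u = -;  *)
(* other positions unchanged.  The resulting argument list is the      *)
(* concatenation (in order) of the blocks, via tagnat.                 *)

Section Subst.
Variables (H : mfun) (P : 'I_(ar_n H) -> bool) (Fp Fn : mfun).

Definition blk_k (c g : bool) : nat :=
  if c then (if g then ar_n Fp else ar_n Fn) else 1.

Definition blk_ar (c g : bool) : 'I_(blk_k c g) -> bool :=
  match c as c0, g as g0 return 'I_(blk_k c0 g0) -> bool with
  | true, true => ar Fp
  | true, false => fun j => ~~ ar Fn j
  | false, g0 => fun _ => g0
  end.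

Definition blk_obj (c g : bool) : ('I_(blk_k c g) -> Ob) -> Ob :=
  match c as c0, g as g0 return ('I_(blk_k c0 g0) -> Ob) -> Ob with
  | true, true => fo Fp
  | true, false => fo Fn
  | false, _ => fun Xb => Xb ord0
  end.

Definition blk_mor (c g : bool) :
  forall {Xb Yb : 'I_(blk_k c g) -> Ob},
    (forall j, vhom (blk_ar c g j) (Xb j) (Yb j)) ->
    vhom g (blk_obj c g Xb) (blk_obj c g Yb) :=
  match c as c0, g as g0 return
    forall Xb Yb : 'I_(blk_k c0 g0) -> Ob,
      (forall j, vhom (blk_ar c0 g0 j) (Xb j) (Yb j)) ->
      vhom g0 (blk_obj c0 g0 Xb) (blk_obj c0 g0 Yb) with
  | true, true => fun Xb Yb fb => fm Fp fb
  | true, false => fun Xb Yb fb => fm Fn (fun j => vflip (fb j))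
  | false, g0 => fun Xb Yb fb => fb ord0
  end.

Definition pk (u : 'I_(ar_n H)) : nat := blk_k (P u) (ar H u).

Local Notation sk := (\sum_(u < ar_n H) pk u)%N.

Definition sar (t : 'I_sk) : bool :=
  let s := @tagnat.sig _ pk t in blk_ar (P (tag s)) (ar H (tag s)) (tagged s).

Definition sfo (X : 'I_sk -> Ob) : Ob :=
  fo H (fun u => blk_obj (P u) (ar H u) (fun j => X (@tagnat.Rank _ pk u j))).

Lemma sar_Rank u (j : 'I_(pk u)) :
  sar (@tagnat.Rank _ pk u j) = blk_ar (P u) (ar H u) j.
Proof. by rewrite /sar /tagnat.Rank tagnat.rankK. Qed.

Definition sfm (X Y : 'I_sk -> Ob) (fs : forall t, vhom (sar t) (X t) (Y t)) :
    Hom (sfo X) (sfo Y) :=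
  fm H (fun u => blk_mor (P u) (ar H u) (Xb := fun j => X (@tagnat.Rank _ pk u j))
                       (Yb := fun j => Y (@tagnat.Rank _ pk u j))
                       (fun j => vcast (sar_Rank u j) (fs (@tagnat.Rank _ pk u j)))).

Definition fsubst : mfun := @MFun sk sar sfo sfm.

Variables (N : nat) (mp : 'I_(ar_n Fp) -> 'I_N) (mn : 'I_(ar_n Fn) -> 'I_N)
          (mo : forall u, P u = false -> 'I_N).

Definition blk_map (c g : bool) (mo' : c = false -> 'I_N) : 'I_(blk_k c g) -> 'I_N :=
  match c as c0 return (c0 = false -> 'I_N) -> 'I_(blk_k c0 g) -> 'I_N with
  | true => fun _ => match g as g0 return 'I_(blk_k true g0) -> 'I_N with
                     | true => mp | false => mn end
  | false => fun mo' _ => mo' erefl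
  end mo'.

Definition smap (t : 'I_sk) : 'I_N :=
  let s := @tagnat.sig _ pk t in blk_map (P (tag s)) (ar H (tag s)) (mo (tag s)) (tagged s).

Lemma sfo_smap (V : 'I_N -> Ob) (Z : 'I_(ar_n H) -> Ob) :
  (forall u, blk_obj (P u) (ar H u) (fun j => V (blk_map (P u) (ar H u) (mo u) j)) = Z u) ->
  sfo (fun t => V (smap t)) = fo H Z.
Proof.
move=> hZ; rewrite /sfo; congr (fo H _); apply: functional_extensionality => u.
rewrite -hZ; congr (blk_obj _ _ _); apply: functional_extensionality => j.
by rewrite /smap /tagnat.Rank tagnat.rankK.
Qed.

End Subst.

(* Variables of phi *_i psi : (B_1..B_{i-1}, A_1..A_n, B_{i+1}..B_m),  *)
(* 0-based: A_a is variable i + a, B_b (b <> i) is b if b < i and      *)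
(* b - 1 + n if b > i.                                                 *)

Lemma inA_lt {m n} (i : 'I_m) (a : 'I_n) : (i + a < m.-1 + n)%N.
Proof. case: i a => [i hi] [a ha] /=; lia. Qed.

Definition inA {m n} (i : 'I_m) (a : 'I_n) : 'I_(m.-1 + n) := Ordinal (inA_lt i a).

Lemma newB_lt {m} n {i b : 'I_m} : b != i ->
  ((if (b < i)%N then val b else (val b).-1 + n) < m.-1 + n)%N.
Proof. case: i b => [i hi] [b hb] /= /eqP hne.
have hne' : b <> i by move=> e; apply: hne; exact: val_inj.
case: ifP => hbi; lia. Qed.

Definition newB {m} n {i b : 'I_m} (h : b != i) : 'I_(m.-1 + n) :=
  Ordinal (newB_lt n h).

Section HComp.
Variables (phi psi : trans) (i : 'I_(tn psi)).

Local Notation n := (tn phi).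
Local Notation m := (tn psi).
Local Notation F := (tdom phi).
Local Notation G := (tcod phi).
Local Notation Hf := (tdom psi).
Local Notation K := (tcod psi).

Definition hdom : mfun := fsubst Hf (fun u => tsig psi u == i) F G.
Definition hcod : mfun := fsubst K (fun v => ttau psi v == i) G F.

Definition hsig : 'I_(ar_n hdom) -> 'I_(m.-1 + n) :=
  smap Hf (fun u => tsig psi u == i) F G (m.-1 + n) (fun j => inA i (tsig phi j)) (fun j => inA i (ttau phi j))
       (fun u (h : (tsig psi u == i) = false) => newB n (negbT h)).

Definition htau : 'I_(ar_n hcod) -> 'I_(m.-1 + n) :=
  smap K (fun v => ttau psi v == i) G F (m.-1 + n) (fun j => inA i (ttau phi j)) (fun j => inA i (tsig phi j))
       (fun v (h : (ttau psi v == i) = false) => newB n (negbT h)).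

Section Comp.
Variable V : 'I_(m.-1 + n) -> Ob.

Definition hA : 'I_n -> Ob := fun a => V (inA i a).
Definition hFv : Ob := fo F (fun j => hA (tsig phi j)).
Definition hGv : Ob := fo G (fun j => hA (ttau phi j)).

(* the entries B_b, b <> i, of the tuple B[F(A sigma)/i] *)
Definition hO (b : 'I_m) : Ob :=
  match b == i as c return (b == i) = c -> Ob with
  | true => fun _ => hFv
  | false => fun h => V (newB n (negbT h))
  end erefl.

(* K(B[F(A sigma),phi_A/i]theta) o psi_{B[F(A sigma)/i]} o H(B[phi_A,F(A sigma)/i]eta) *)
Definition hraw :
  Hom (fo Hf (obs (ar Hf) (tsig psi) hO i (pc hGv hFv)))
      (fo K (obs (ar K) (ttau psi) hO i (pc hFv hGv))) :=
  comp (fm K (mtup (ar K) (ttau psi) hO i (fun _ => hFv) (pc hFv hGv)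
                 (idm hFv) (tcomp phi hA)))
   (comp (tcomp psi (subst1 hO i hFv))
         (fm Hf (mtup (ar Hf) (tsig psi) hO i (pc hGv hFv) (fun _ => hFv)
                   (tcomp phi hA) (idm hFv)))).

Lemma hdom_eq : fo hdom (fun t => V (hsig t)) =
                fo Hf (obs (ar Hf) (tsig psi) hO i (pc hGv hFv)).
Proof.
apply: sfo_smap => u; rewrite /obs /hO.
move: (@newB m n i (tsig psi u)).
case: (tsig psi u == i) => /= nb; last by [].
by case: (ar Hf u).
Qed.

Lemma hcod_eq : fo hcod (fun t => V (htau t)) =
                fo K (obs (ar K) (ttau psi) hO i (pc hFv hGv)).
Proof.
apply: sfo_smap => u; rewrite /obs /hO.
move: (@newB m n i (ttau psi u)).
case: (ttau psi u == i) => /= nb; last by [].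
by case: (ar K u).
Qed.

Definition hcomp_comp : Hom (fo hdom (fun t => V (hsig t)))
                            (fo hcod (fun t => V (htau t))) :=
  castHom (esym hdom_eq) (esym hcod_eq) hraw.

End Comp.

Definition hcomp : trans := @Trans hdom hcod (m.-1 + n) hsig htau hcomp_comp.

End HComp.

End MixedVariance.

(* Main.v *)
From Pilot Require Import Defs.
From mathcomp Require Import all_boot all_order.
From mathcomp Require Import zify.
From Stdlib Require Import FunctionalExtensionality ProofIrrelevance Eqdep.
Import Pilot.Defs.


Section Infra.
Variable C : category.

Definition HP {x y : Ob C} (f : Hom x y) : {p : Ob C * Ob C & Hom p.1 p.2} :=
  existT (fun p => Hom p.1 p.2) (x, y) f.

Definition UH {b : bool} {x y : Ob C} : vhom C b x y -> {p : Ob C * Ob C & Hom p.1 p.2} :=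
  match b return vhom C b x y -> _ with
  | true => fun f => HP f | false => fun f => HP f end.

Lemma HP_ends {x y x' y' : Ob C} {f : Hom x y} {g : Hom x' y'} :
  HP f = HP g -> x = x' /\ y = y'.
Proof. move=> /(congr1 (@projT1 _ _)) /= [] -> ->; by split. Qed.

Lemma HP_inj {x y : Ob C} (f g : Hom x y) : HP f = HP g -> f = g.
Proof. move=> h; exact: (inj_pair2 _ (fun p : Ob C * Ob C => Hom p.1 p.2) (x,y) f g h). Qed.

Lemma HP_castHom {x x' y y' : Ob C} (e1 : x = x') (e2 : y = y') (f : Hom x y) :
  HP (castHom C e1 e2 f) = HP f.
Proof. destruct e1, e2; reflexivity. Qed.

Lemma UH_vcast {b b' : bool} {x y : Ob C} (e : b = b') (f : vhom C b x y) :
  UH (vcast C e f) = UH f.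
Proof. destruct e; reflexivity. Qed.

Lemma UH_vflip {b : bool} {x y : Ob C} (f : vhom C (~~ b) x y) :
  UH (vflip C f) = UH f.
Proof. by case: b f. Qed.

Lemma UH_ends {b : bool} {x y x' y' : Ob C} {f : vhom C b x y} {g : vhom C b x' y'} :
  UH f = UH g -> x = x' /\ y = y'.
Proof. by case: b f g => f g /HP_ends [-> ->]. Qed.

Lemma UH_inj {b : bool} {x y : Ob C} (f g : vhom C b x y) : UH f = UH g -> f = g.
Proof. by case: b f g => f g /HP_inj. Qed.

Lemma HP_comp {a b c a' b' c' : Ob C} (f : Hom a b) (g : Hom b c)
   (f' : Hom a' b') (g' : Hom b' c') :
  HP f = HP f' -> HP g = HP g' -> HP (comp g f) = HP (comp g' f').
Proof.
move=> hf hg; case: (HP_ends hf) => ea eb; case: (HP_ends hg) => _ ec.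
subst. by rewrite (HP_inj _ _ hf) (HP_inj _ _ hg).
Qed.

Lemma fm_UH (F : mfun C) (X Y X' Y' : 'I_(ar_n C F) -> Ob C)
  (g : forall u, vhom C (ar C F u) (X u) (Y u))
  (g' : forall u, vhom C (ar C F u) (X' u) (Y' u)) :
  (forall u, UH (g u) = UH (g' u)) -> HP (fm C F g) = HP (fm C F g').
Proof.
move=> h.
have EX : X = X' by apply: functional_extensionality => u; case: (UH_ends (h u)).
have EY : Y = Y' by apply: functional_extensionality => u; case: (UH_ends (h u)).
subst.
have -> : g = g'.
  by apply: functional_extensionality_dep => u; apply: UH_inj; exact: h.
by [].
Qed.


Lemma mfun_ext (F1 F2 : mfun C) (e : ar_n C F1 = ar_n C F2)
  (har : forall t1 t2, val t1 = val t2 -> ar C F1 t1 = ar C F2 t2)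
  (hfo : forall X1 X2, (forall t1 t2, val t1 = val t2 -> X1 t1 = X2 t2) ->
         fo C F1 X1 = fo C F2 X2)
  (hfm : forall X1 Y1 X2 Y2 (f1 : forall t, vhom C (ar C F1 t) (X1 t) (Y1 t))
           (f2 : forall t, vhom C (ar C F2 t) (X2 t) (Y2 t)),
         (forall t1 t2, val t1 = val t2 -> UH (f1 t1) = UH (f2 t2)) ->
         HP (fm C F1 f1) = HP (fm C F2 f2)) : F1 = F2.
Proof.
case: F1 e har hfo hfm => n1 ar1 fo1 fm1; case: F2 => n2 ar2 fo2 fm2 /= e.
subst n2 => har hfo hfm.
have ea : ar1 = ar2.
  by apply: functional_extensionality => t; apply: har.
subst ar2.
have ef : fo1 = fo2.
  apply: functional_extensionality => X; apply: hfo => t1 t2 /val_inj -> //.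
subst fo2.
have -> : @fm1 = @fm2; last by [].
apply: functional_extensionality_dep => X; apply: functional_extensionality_dep => Y.
apply: functional_extensionality_dep => f; apply: HP_inj; apply: hfm.
by move=> t1 t2 /val_inj ->.
Qed.

Lemma trans_ext (T1 T2 : trans C) (ed : tdom C T1 = tdom C T2)
  (ec : tcod C T1 = tcod C T2) (en : tn C T1 = tn C T2)
  (hs : forall u1 u2, val u1 = val u2 -> val (tsig C T1 u1) = val (tsig C T2 u2))
  (ht : forall u1 u2, val u1 = val u2 -> val (ttau C T1 u1) = val (ttau C T2 u2))
  (hc : forall A1 A2, (forall a1 a2, val a1 = val a2 -> A1 a1 = A2 a2) ->
        HP (tcomp C T1 A1) = HP (tcomp C T2 A2)) : T1 = T2.
Proof.
case: T1 ed ec en hs ht hc => d1 c1 n1 s1 t1 k1; case: T2 => d2 c2 n2 s2 t2 k2 /=.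
move=> ed ec en; subst d2 c2 n2 => hs ht hc.
have es : s1 = s2.
  apply: functional_extensionality => u; apply: val_inj; exact: hs.
have et : t1 = t2.
  apply: functional_extensionality => u; apply: val_inj; exact: ht.
subst s2 t2.
have -> : k1 = k2; last by [].
apply: functional_extensionality_dep => A; apply: HP_inj; apply: hc.
by move=> a1 a2 /val_inj ->.
Qed.

End Infra.


Lemma big_Rank {n} (p : 'I_n -> nat) (h : 'I_(\sum_(u < n) p u) -> nat)
   (Pr : pred 'I_(\sum_(u < n) p u)) :
  (\sum_(x | Pr x) h x = \sum_(u < n) \sum_(v < p u | Pr (tagnat.Rank u v)) h (tagnat.Rank u v))%N.
Proof.
rewrite (reindex (@tagnat.rank _ p)); last exact: onW_bij (tagnat.rank_bij).
rewrite (sig_big_dep xpredT (fun u v => Pr (tagnat.Rank u v)) (fun u v => h (tagnat.Rank u v))) /=.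
by apply: eq_big => -[u v].
Qed.

Section RankArith.
Variables (n : nat) (p : 'I_n -> nat).
Local Notation S u := (\sum_(k < n | (k < u)%N) p k)%N.

Lemma S_mono (u' u : 'I_n) : (u' < u)%N -> (S u' + p u' <= S u)%N.
Proof.
move=> lt.
rewrite [X in (_ <= X)%N](bigID (fun k : 'I_n => (k < u')%N)) /=.
apply: leq_add.
  rewrite leq_eqVlt; apply/orP; left; apply/eqP; apply: eq_bigl => k.
  by case: (ltnP k u') => h; rewrite ?andbT ?andbF // (ltn_trans h lt).
by rewrite (bigD1 u') /= ?ltnn ?lt // leq_addr.
Qed.

Lemma Rank_lt (u' u : 'I_n) (w' : 'I_(p u')) (w : 'I_(p u)) :
  (tagnat.Rank u' w' < tagnat.Rank u w)%N =
  ((u' < u)%N || ((u' == u) && (w' < w)%N)).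
Proof.
rewrite !tagnat.RankEsum.
have hw' := ltn_ord w'; have hw := ltn_ord w.
case: (ltngtP u' u) => h.
- rewrite orTb; apply: (leq_trans _ (leq_addr _ _)); apply: (leq_trans _ (S_mono _ _ h)).
  by rewrite ltn_add2l.
- have -> : (u' == u) = false.
    by apply/eqP => e; rewrite e ltnn in h.
  rewrite orFb; apply/negP => hc; have := S_mono _ _ h.
  rewrite leqNgt => /negP; apply; apply: (leq_ltn_trans (leq_addr w' _)).
  apply: (leq_trans hc); rewrite leq_add2l; exact: ltnW.
- have e : u' = u by apply: val_inj.
  subst u'; rewrite eqxx orFb andTb ltn_add2l //.
Qed.
End RankArith.

Lemma rank2 {n} (r : 'I_n -> nat) (q : 'I_(\sum_(u < n) r u) -> nat) (pk : 'I_n -> nat)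
  (hpk : forall u, pk u = \sum_(w < r u) q (tagnat.Rank u w))
  (u : 'I_n) (w : 'I_(r u)) (k : 'I_(q (tagnat.Rank u w))) (v : 'I_(pk u)) :
  (v : nat) = (\sum_(w' < r u | (w' < w)%N) q (tagnat.Rank u w') + k)%N ->
  (tagnat.Rank (tagnat.Rank u w) k : nat) = tagnat.Rank u v.
Proof.
move=> hv; rewrite (tagnat.RankEsum k) (tagnat.RankEsum v) hv addnA; congr (_ + _)%N.
apply: etrans; first exact: (big_Rank r q (fun x => (x < tagnat.Rank u w)%N)).
rewrite (bigID (fun u' : 'I_n => (u' < u)%N)) /=; congr (_ + _)%N.
  apply: eq_bigr => u' hu'; rewrite hpk; apply: eq_bigl => w'.
  by rewrite Rank_lt hu'.
rewrite (bigD1 u) ?ltnn //= [X in (_ + X)%N]big1 ?addn0.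
  by apply: eq_bigl => w'; rewrite Rank_lt ltnn eqxx.
move=> u' /andP [h1 h2]; apply: big1 => w'.
rewrite Rank_lt (negbTE h1) (negbTE h2) //.
Qed.


Lemma ordP {n} (a b : 'I_n) : nat_of_ord a = nat_of_ord b -> a = b.
Proof. exact: val_inj. Qed.

Lemma partial_lt {m} (f : 'I_m -> nat) (w : 'I_m) (k : nat) :
  (k < f w)%N -> (\sum_(w' < m | (w' < w)%N) f w' + k < \sum_(w' < m) f w')%N.
Proof.
move=> hk; rewrite [X in (_ < X)%N](bigID (fun w' : 'I_m => (w' < w)%N)) /= ltn_add2l.
by rewrite (bigD1 w) ?ltnn //= (leq_trans hk) // leq_addr.
Qed.

Section Assoc.
Variable C : category.
Variables (H Hp Hn F G : mfun C) (P : 'I_(ar_n C H) -> bool)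
  (Qp : 'I_(ar_n C Hp) -> bool) (Qn : 'I_(ar_n C Hn) -> bool).
Local Notation L1p := (fsubst C Hp Qp F G).
Local Notation L1n := (fsubst C Hn Qn G F).
Local Notation L1 := (fsubst C H P L1p L1n).
Local Notation Mid := (fsubst C H P Hp Hn).
Variable (Q2 : 'I_(ar_n C Mid) -> bool).

Definition blkQ c g : 'I_(blk_k C Hp Hn c g) -> bool :=
  match c as c0, g as g0 return 'I_(blk_k C Hp Hn c0 g0) -> bool with
  | true, true => Qp | true, false => Qn | false, _ => fun _ => false end.

Hypothesis hQ2 : forall u w, Q2 (tagnat.Rank u w) = blkQ (P u) (ar C H u) w.
Local Notation R1 := (fsubst C Mid Q2 F G).

Definition qb c g (w : 'I_(blk_k C Hp Hn c g)) : nat :=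
  blk_k C F G (blkQ c g w) (blk_ar C Hp Hn c g w).

Local Notation r := (pk C H P Hp Hn).
Local Notation q := (pk C Mid Q2 F G).
Local Notation pk1 := (pk C H P L1p L1n).

Lemma q_Rank u w : q (tagnat.Rank u w) = qb (P u) (ar C H u) w.
Proof. by rewrite /pk hQ2 /= sar_Rank. Qed.

Lemma blk_sum c g : blk_k C L1p L1n c g = (\sum_(w < blk_k C Hp Hn c g) qb c g w)%N.
Proof.
case: c; case: g => //=.
- apply: eq_bigr => w _; rewrite /qb /pk /=.
  by case: (Qn w); case: (ar C Hn w).
- by rewrite big_ord1.
- by rewrite big_ord1.
Qed.

Lemma pk1_sum u : pk1 u = (\sum_(w < r u) q (tagnat.Rank u w))%N.
Proof.
have -> : pk1 u = blk_k C L1p L1n (P u) (ar C H u) by [].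
by rewrite blk_sum; apply: eq_bigr => w _; rewrite q_Rank.
Qed.

Lemma arn_eq : ar_n C L1 = ar_n C R1.
Proof.
change ((\sum_u pk1 u)%N = (\sum_x q x)%N).
apply: esym; apply: etrans; first exact: (big_Rank r q (fun _ => true)).
by apply: eq_bigr => u _; rewrite pk1_sum.
Qed.

Lemma decomp_aux (t1 : 'I_(ar_n C L1)) (x : 'I_(ar_n C Mid)) (k : 'I_(q x)) :
  val t1 = val (tagnat.Rank x k) ->
  exists u w (k' : 'I_(q (tagnat.Rank u w))) (v : 'I_(pk1 u)),
    t1 = tagnat.Rank u v /\ tagnat.Rank x k = tagnat.Rank (tagnat.Rank u w) k' /\
    (v : nat) = (\sum_(w' < r u | (w' < w)%N) q (tagnat.Rank u w') + k')%N.
Proof.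
move: k; rewrite -[x](tagnat.sig2K x); move: (tagnat.sig1 x) (tagnat.sig2 x) => u w k e.
have hlt : (\sum_(w' < r u | (w' < w)%N) q (tagnat.Rank u w') + k < pk1 u)%N.
  by rewrite pk1_sum; apply: partial_lt.
exists u, w, k, (Ordinal hlt); split; last by split.
apply: val_inj; rewrite /= e; apply: (rank2 r q pk1 pk1_sum) => //.
Qed.

Lemma decomp (t1 : 'I_(ar_n C L1)) (t2 : 'I_(ar_n C R1)) : val t1 = val t2 ->
  exists u w (k : 'I_(q (tagnat.Rank u w))) (v : 'I_(pk1 u)),
    t1 = tagnat.Rank u v /\ t2 = tagnat.Rank (tagnat.Rank u w) k /\
    (v : nat) = (\sum_(w' < r u | (w' < w)%N) q (tagnat.Rank u w') + k)%N.
Proof. by rewrite -[t2](tagnat.sig2K t2); apply: decomp_aux. Qed.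


Lemma blk_ar_eq (X Y : mfun C) c g c' g' (k : 'I_(blk_k C X Y c g)) (k' : 'I_(blk_k C X Y c' g')) :
  c = c' -> g = g' -> val k = val k' -> blk_ar C X Y c g k = blk_ar C X Y c' g' k'.
Proof. by move=> ec eg; subst c' g' => /val_inj ->. Qed.

Lemma blk_obj_eq (X Y : mfun C) c g c' g' (Z : 'I_(blk_k C X Y c g) -> Ob C)
  (Z' : 'I_(blk_k C X Y c' g') -> Ob C) :
  c = c' -> g = g' -> (forall k k', val k = val k' -> Z k = Z' k') ->
  blk_obj C X Y c g Z = blk_obj C X Y c' g' Z'.
Proof.
move=> ec eg; subst c' g' => h; congr (blk_obj _ _ _ _ _ _).
by apply: functional_extensionality => k; apply: h.
Qed.

Lemma blk_mor_UH (X Y : mfun C) c g Xa Ya Xb Yb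
  (fa : forall k, vhom C (blk_ar C X Y c g k) (Xa k) (Ya k))
  (fb : forall k, vhom C (blk_ar C X Y c g k) (Xb k) (Yb k)) :
  (forall k, UH C (fa k) = UH C (fb k)) ->
  UH C (blk_mor C X Y c g fa) = UH C (blk_mor C X Y c g fb).
Proof.
move: Xa Ya Xb Yb fa fb; case: c; case: g => /= Xa Ya Xb Yb fa fb h.
- exact: fm_UH.
- apply: fm_UH => k; rewrite !UH_vflip; exact: h.
- exact: h.
- exact: h.
Qed.

Lemma blk_mor_eq (X Y : mfun C) c g c' g' Xa Ya Xb Yb
  (fa : forall k, vhom C (blk_ar C X Y c g k) (Xa k) (Ya k))
  (fb : forall k, vhom C (blk_ar C X Y c' g' k) (Xb k) (Yb k)) :
  c = c' -> g = g' ->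
  (forall k k', val k = val k' -> UH C (fa k) = UH C (fb k')) ->
  UH C (blk_mor C X Y c g fa) = UH C (blk_mor C X Y c' g' fb).
Proof.
move=> ec eg; subst c' g' => h; apply: blk_mor_UH => k; exact: h.
Qed.

Lemma flip_k c g : blk_k C G F c g = blk_k C F G c (~~ g).
Proof. by case: c; case: g. Qed.

Lemma flip_obj c g (Y1 : 'I_(blk_k C G F c g) -> Ob C) (Y2 : 'I_(blk_k C F G c (~~ g)) -> Ob C) :
  (forall k1 k2, val k1 = val k2 -> Y1 k1 = Y2 k2) ->
  blk_obj C G F c g Y1 = blk_obj C F G c (~~ g) Y2.
Proof.
case: c Y1 Y2; case: g => /= Y1 Y2 h; try by apply: h.
- by congr (fo _ _ _); apply: functional_extensionality => k; apply: h.
- by congr (fo _ _ _); apply: functional_extensionality => k; apply: h.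
Qed.

Lemma flip_mor c g Xa Ya Xb Yb
  (fa : forall k, vhom C (blk_ar C G F c g k) (Xa k) (Ya k))
  (fb : forall k, vhom C (blk_ar C F G c (~~ g) k) (Xb k) (Yb k)) :
  (forall k1 k2, val k1 = val k2 -> UH C (fa k1) = UH C (fb k2)) ->
  UH C (blk_mor C G F c g fa) = UH C (blk_mor C F G c (~~ g) fb).
Proof.
move: Xa Ya Xb Yb fa fb; case: c; case: g => /= Xa Ya Xb Yb fa fb h.
- apply: fm_UH => k; rewrite UH_vflip; exact: h.
- apply: fm_UH => k; rewrite UH_vflip; exact: h.
- exact: h.
- exact: h.
Qed.

Lemma flip_ar c g (k1 : 'I_(blk_k C G F c g)) (k2 : 'I_(blk_k C F G c (~~ g))) :
  val k1 = val k2 -> ~~ blk_ar C G F c g k1 = blk_ar C F G c (~~ g) k2.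
Proof.
by case: c k1 k2; case: g => /= k1 k2 /val_inj e; rewrite ?e ?negbK.
Qed.

Local Notation Sb c g w := (\sum_(w' < blk_k C Hp Hn c g | (w' < w)%N) qb c g w')%N.

Lemma Rank_tt w (k : 'I_(qb true true w)) :
  (tagnat.Rank (p_ := pk C Hp Qp F G) w k : nat) = (Sb true true w + k)%N.
Proof. by rewrite tagnat.RankEsum. Qed.

Lemma Rank_tf w (k : 'I_(pk C Hn Qn G F w)) :
  (tagnat.Rank (p_ := pk C Hn Qn G F) w k : nat) = (Sb true false w + k)%N.
Proof.
rewrite tagnat.RankEsum; congr (_ + _)%N; apply: eq_bigr => w' _.
by rewrite /qb /pk /= flip_k.
Qed.

Lemma AB c g (v : 'I_(blk_k C L1p L1n c g)) (w : 'I_(blk_k C Hp Hn c g)) (k : 'I_(qb c g w)) :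
  (v : nat) = (Sb c g w + k)%N ->
  blk_ar C L1p L1n c g v = blk_ar C F G (blkQ c g w) (blk_ar C Hp Hn c g w) k.
Proof.
case: c v w k; case: g => /= v w k hv.
- have -> : v = tagnat.Rank w k by apply: ordP; rewrite hv Rank_tt.
  by rewrite sar_Rank.
- have e := flip_k (Qn w) (ar C Hn w).
  have -> : v = tagnat.Rank w (cast_ord (esym e) k).
    by apply: ordP; rewrite hv Rank_tf.
  by rewrite sar_Rank; apply: flip_ar.
- by [].
- by [].
Qed.


Lemma Sb_false g (w : 'I_(blk_k C Hp Hn false g)) : Sb false g w = 0%N.
Proof. by rewrite big1 // => w'; case: w' w => [[]] // ? [[]]. Qed.

Lemma OB c g (X1 : 'I_(blk_k C L1p L1n c g) -> Ob C) (cq gq : 'I_(blk_k C Hp Hn c g) -> bool)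
  (ecq : forall w, cq w = blkQ c g w) (egq : forall w, gq w = blk_ar C Hp Hn c g w)
  (X2 : forall w, 'I_(blk_k C F G (cq w) (gq w)) -> Ob C) :
  (forall (v : 'I_(blk_k C L1p L1n c g)) (w : 'I_(blk_k C Hp Hn c g))
     (k : 'I_(blk_k C F G (cq w) (gq w))), (v : nat) = (Sb c g w + k)%N -> X1 v = X2 w k) ->
  blk_obj C L1p L1n c g X1 = blk_obj C Hp Hn c g (fun w => blk_obj C F G (cq w) (gq w) (X2 w)).
Proof.
have E1 : cq = blkQ c g := functional_extensionality _ _ ecq.
have E2 : gq = blk_ar C Hp Hn c g := functional_extensionality _ _ egq.
subst cq gq; clear ecq egq; move: X1 X2; case: c; case: g => /= X1 X2 h.
- congr (fo _ _ _); apply: functional_extensionality => w.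
  congr (blk_obj _ _ _ _ _ _); apply: functional_extensionality => k.
  by apply: h; rewrite Rank_tt.
- congr (fo _ _ _); apply: functional_extensionality => w.
  apply: flip_obj => k1 k2 ek; apply: h; rewrite Rank_tf ek //.
- by apply: h; rewrite Sb_false.
- by apply: h; rewrite Sb_false.
Qed.

Lemma MB c g Xa Ya (f1 : forall v, vhom C (blk_ar C L1p L1n c g v) (Xa v) (Ya v))
  (cq gq : 'I_(blk_k C Hp Hn c g) -> bool)
  (ecq : forall w, cq w = blkQ c g w) (egq : forall w, gq w = blk_ar C Hp Hn c g w)
  (e : forall w, gq w = blk_ar C Hp Hn c g w) Xb Yb
  (f2 : forall w (k : 'I_(blk_k C F G (cq w) (gq w))),
        vhom C (blk_ar C F G (cq w) (gq w) k) (Xb w k) (Yb w k)) :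
  (forall (v : 'I_(blk_k C L1p L1n c g)) (w : 'I_(blk_k C Hp Hn c g))
     (k : 'I_(blk_k C F G (cq w) (gq w))), (v : nat) = (Sb c g w + k)%N -> UH C (f1 v) = UH C (f2 w k)) ->
  UH C (blk_mor C L1p L1n c g f1) =
  UH C (blk_mor C Hp Hn c g (fun w => vcast C (e w) (blk_mor C F G (cq w) (gq w) (f2 w)))).
Proof.
have E1 : cq = blkQ c g := functional_extensionality _ _ ecq.
have E2 : gq = blk_ar C Hp Hn c g := functional_extensionality _ _ egq.
subst cq gq; clear ecq egq => h.
rewrite [RHS](@blk_mor_UH _ _ _ _ _ _ _ _ _ (fun w => blk_mor C F G _ _ (f2 w))); last first.
  by move=> w; rewrite UH_vcast.
move: Xa Ya f1 Xb Yb f2 h {e}; case: c; case: g => /= Xa Ya f1 Xb Yb f2 h.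
- apply: fm_UH => w; apply: blk_mor_UH => k; rewrite UH_vcast.
  by apply: h; rewrite Rank_tt.
- apply: fm_UH => w; rewrite UH_vflip; apply: flip_mor => k1 k2 ek.
  rewrite UH_vcast UH_vflip; apply: h; rewrite Rank_tf ek //.
- by apply: h; rewrite Sb_false.
- by apply: h; rewrite Sb_false.
Qed.


Lemma S_qb u (w : 'I_(r u)) :
  (\sum_(w' < r u | (w' < w)%N) q (tagnat.Rank u w'))%N = Sb (P u) (ar C H u) w.
Proof. by apply: eq_bigr => w' _; rewrite q_Rank. Qed.

Lemma assoc_mfun : L1 = R1.
Proof.
apply: (mfun_ext C L1 R1 arn_eq).
- move=> t1 t2 /decomp [u [w [k [v [-> [-> hv]]]]]].
  change (sar C H P L1p L1n (tagnat.Rank u v) = sar C Mid Q2 F G (tagnat.Rank (tagnat.Rank u w) k)).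
  rewrite !sar_Rank (AB _ _ v w (cast_ord (q_Rank u w) k)); last by rewrite hv S_qb.
  by apply: blk_ar_eq; [rewrite hQ2 | rewrite /= sar_Rank | ].
- move=> X1 X2 hX.
  change (fo C H (fun u => blk_obj C L1p L1n (P u) (ar C H u) (fun v => X1 (tagnat.Rank u v))) =
          fo C H (fun u => blk_obj C Hp Hn (P u) (ar C H u) (fun w =>
             blk_obj C F G (Q2 (tagnat.Rank u w)) (sar C H P Hp Hn (tagnat.Rank u w))
               (fun k => X2 (tagnat.Rank (tagnat.Rank u w) k))))).
  congr (fo _ _ _); apply: functional_extensionality => u.
  apply: OB => [w|w|v w k hv]; first exact: hQ2; first exact: sar_Rank.
  apply: hX; apply: esym; apply: (rank2 r q pk1 pk1_sum); rewrite hv S_qb //.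
- move=> X1 Y1 X2 Y2 f1 f2 hf.
  change (HP C (fm C H (fun u => blk_mor C L1p L1n (P u) (ar C H u)
             (fun v => vcast C (sar_Rank C H P L1p L1n u v) (f1 (tagnat.Rank u v))))) =
          HP C (fm C H (fun u => blk_mor C Hp Hn (P u) (ar C H u) (fun w =>
             vcast C (sar_Rank C H P Hp Hn u w)
              (blk_mor C F G (Q2 (tagnat.Rank u w)) (ar C Mid (tagnat.Rank u w))
                (fun k => vcast C (sar_Rank C Mid Q2 F G (tagnat.Rank u w) k)
                     (f2 (tagnat.Rank (tagnat.Rank u w) k)))))))).
  apply: fm_UH => u.
  apply: (MB _ _ _ _ _ (fun w => Q2 (tagnat.Rank u w)) (fun w => sar C H P Hp Hn (tagnat.Rank u w)))
    => [w|w|v w k hv]; first exact: hQ2; first exact: sar_Rank.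
  rewrite !UH_vcast; apply: hf; apply: esym; apply: (rank2 r q pk1 pk1_sum); rewrite hv S_qb //.
Qed.

End Assoc.


Lemma smap_Rank C H P Fp Fn N mp mn mo u (v : 'I_(pk C H P Fp Fn u)) :
  smap C H P Fp Fn N mp mn mo (tagnat.Rank u v) =
  blk_map C Fp Fn N mp mn (P u) (ar C H u) (mo u) v.
Proof. by rewrite /smap /tagnat.Rank tagnat.rankK. Qed.

Section Nmap.
Variable C : category.

Definition nmap (X Y : mfun C) (fp : 'I_(ar_n C X) -> nat) (fn : 'I_(ar_n C Y) -> nat)
  (z : nat) (c g : bool) : 'I_(blk_k C X Y c g) -> nat :=
  match c as c0, g as g0 return 'I_(blk_k C X Y c0 g0) -> nat with
  | true, true => fp | true, false => fn | false, _ => fun _ => z end.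

Lemma blk_map_val X Y N mp mn c g (mo : c = false -> 'I_N) k z :
  (forall h, (mo h : nat) = z) ->
  (blk_map C X Y N mp mn c g mo k : nat) =
  nmap X Y (fun a => mp a : nat) (fun a => mn a : nat) z c g k.
Proof. by case: c mo k; case: g => /= mo k h //; rewrite h. Qed.

Lemma nmap_eq X Y fp fn z z' c g c' g' (k : 'I_(blk_k C X Y c g)) (k' : 'I_(blk_k C X Y c' g')) :
  c = c' -> g = g' -> val k = val k' -> (c' = false -> z = z') ->
  nmap X Y fp fn z c g k = nmap X Y fp fn z' c' g' k'.
Proof.
move=> ec eg; subst c' g' => e hz; have {e} -> : k = k' by apply: val_inj.
by case: c hz k' {k} => hz k' //=; rewrite hz.
Qed.

Lemma nmap_shift X Y fa fb fa' fb' za zb d c g (k : 'I_(blk_k C X Y c g)) :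
  (forall a, (d + fa a)%N = fa' a) -> (forall a, (d + fb a)%N = fb' a) ->
  (c = false -> (d + za)%N = zb) ->
  (d + nmap X Y fa fb za c g k)%N = nmap X Y fa' fb' zb c g k.
Proof. by case: c k; case: g => /= k h1 h2 h3; rewrite ?h1 ?h2 ?h3. Qed.

Lemma nmap_flip X Y fa fb z c g (k1 : 'I_(blk_k C Y X c g)) (k2 : 'I_(blk_k C X Y c (~~ g))) :
  val k1 = val k2 -> nmap Y X fa fb z c g k1 = nmap X Y fb fa z c (~~ g) k2.
Proof. by case: c k1 k2; case: g => /= k1 k2 /val_inj e; rewrite ?e. Qed.

End Nmap.

Section Main.
Variables (C : category) (phi psi chi : trans C) (i : 'I_(tn C psi)) (j : 'I_(tn C chi)).
Local Notation F := (tdom C phi).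
Local Notation G := (tcod C phi).
Local Notation H := (tdom C psi).
Local Notation K := (tcod C psi).
Local Notation L := (tdom C chi).
Local Notation M := (tcod C chi).
Local Notation LHS := (hcomp C (hcomp C phi psi i) chi j).
Local Notation RHS := (hcomp C phi (hcomp C psi chi j) (inA j i)).

Lemma newB_val {m} n {a b : 'I_m} (h : b != a) :
  (newB n h : nat) = if (b < a)%N then (b : nat) else (b.-1 + n)%N.
Proof. by []. Qed.

Lemma inA_val {m n} (a : 'I_m) (b : 'I_n) : (inA a b : nat) = (a + b)%N.
Proof. by []. Qed.

Lemma inA_eq2 {m n} (a : 'I_m) (b b' : 'I_n) : (inA a b == inA a b') = (b == b').
Proof.
apply/eqP/eqP => [e|->] //; move: (congr1 (@nat_of_ord _) e); rewrite !inA_val => {}e.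
by apply: val_inj => /=; lia.
Qed.

Lemma blkQ_map (X Y : mfun C) (sx : 'I_(ar_n C X) -> 'I_(tn C psi)) (sy : 'I_(ar_n C Y) -> 'I_(tn C psi))
  c g (mo : c = false -> 'I_((tn C chi).-1 + tn C psi)) w :
  (forall h, mo h != inA j i) ->
  (blk_map C X Y _ (fun v => inA j (sx v)) (fun v => inA j (sy v)) c g mo w == inA j i) =
  blkQ C X Y (fun v => sx v == i) (fun v => sy v == i) c g w.
Proof.
case: c mo w; case: g => /= mo w h; rewrite ?inA_eq2 //; exact/negbTE/h.
Qed.

Lemma newB_ne (b : 'I_(tn C chi)) (h : (b == j) = false) : newB (tn C psi) (negbT h) != inA j i.
Proof.
apply/eqP => /(congr1 (@nat_of_ord _)); rewrite newB_val inA_val.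
have hi := ltn_ord i; have hne : (b : nat) <> j.
  by move=> e; move/negP: (negbT h); apply; apply/eqP; exact: val_inj e.
case: ifP => hl; lia.
Qed.

Lemma hQdom u w : (hsig C psi chi j (tagnat.Rank u w) == inA j i) =
  blkQ C H K (fun v => tsig C psi v == i) (fun v => ttau C psi v == i)
    (tsig C chi u == j) (ar C L u) w.
Proof.
rewrite /hsig smap_Rank; apply: blkQ_map => h; exact: newB_ne.
Qed.

Lemma dom_eq : tdom C LHS = tdom C RHS.
Proof. exact: (assoc_mfun _ _ _ _ _ _ _ _ _ _ hQdom). Qed.

Lemma hQcod u w : (htau C psi chi j (tagnat.Rank u w) == inA j i) =
  blkQ C K H (fun v => ttau C psi v == i) (fun v => tsig C psi v == i)
    (ttau C chi u == j) (ar C M u) w.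
Proof.
rewrite /htau smap_Rank; apply: blkQ_map => h; exact: newB_ne.
Qed.

Lemma cod_eq : tcod C LHS = tcod C RHS.
Proof. exact: (assoc_mfun _ _ _ _ _ _ _ _ _ _ hQcod). Qed.

Lemma tn_eq : tn C LHS = tn C RHS.
Proof. rewrite /= ; have := ltn_ord i; lia. Qed.

Definition newBv (a b n : nat) : nat := if (b < a)%N then b else (b.-1 + n)%N.

Lemma newB_v {m} n {a b : 'I_m} (h : b != a) : (newB n h : nat) = newBv a b n.
Proof. by []. Qed.

Local Notation Qs := (fun v => tsig C psi v == i).
Local Notation Qt := (fun v => ttau C psi v == i).
Local Notation Hd := (tdom C (hcomp C phi psi i)).
Local Notation Kd := (tcod C (hcomp C phi psi i)).

Lemma SB c g (v : 'I_(blk_k C Hd Kd c g)) (w : 'I_(blk_k C H K c g))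
  (k : 'I_(qb C H K F G Qs Qt c g w)) (b : nat) :
  (c = false -> b <> j) ->
  (v : nat) = (\sum_(w' < blk_k C H K c g | (w' < w)%N) qb C H K F G Qs Qt c g w' + k)%N ->
  nmap C Hd Kd (fun a => inA j (tsig C (hcomp C phi psi i) a) : nat)
    (fun a => inA j (ttau C (hcomp C phi psi i) a) : nat)
    (newBv j b ((tn C psi).-1 + tn C phi)) c g v =
  nmap C F G (fun a => inA (inA j i) (tsig C phi a) : nat)
    (fun a => inA (inA j i) (ttau C phi a) : nat)
    (newBv (inA j i) (nmap C H K (fun a => inA j (tsig C psi a) : nat)
        (fun a => inA j (ttau C psi a) : nat) (newBv j b (tn C psi)) c g w) (tn C phi))
    (blkQ C H K Qs Qt c g w) (blk_ar C H K c g w) k.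
Proof.
have hi := ltn_ord i.
case: c v w k; case: g => /= v w k hb hv.
- have -> : v = tagnat.Rank w k by apply: ordP; rewrite hv Rank_tt.
  rewrite /hsig smap_Rank (blk_map_val _ _ _ _ _ _ _ _ _ _ (newBv i (tsig C psi w) (tn C phi))) //.
  apply: nmap_shift => [a|a|hq] /=; rewrite ?addnA //.
  have hq' : (tsig C psi w : nat) <> i.
    by move=> e; move/negP: (negbT hq); apply; apply/eqP; exact: val_inj e.
  rewrite /newBv; case: ifP; case: ifP => h1 h2; lia.
- have e := flip_k C F G (ttau C psi w == i) (ar C K w).
  have -> : v = tagnat.Rank w (cast_ord (esym e) k) by apply: ordP; rewrite hv (Rank_tf C H K F G Qs Qt).
  rewrite /htau smap_Rank (blk_map_val _ _ _ _ _ _ _ _ _ _ (newBv i (ttau C psi w) (tn C phi))) //.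
  rewrite (nmap_flip _ _ _ _ _ _ _ _ _ k) //.
  apply: nmap_shift => [a|a|hq] /=; rewrite ?addnA //.
  have hq' : (ttau C psi w : nat) <> i.
    by move=> e'; move/negP: (negbT hq); apply; apply/eqP; exact: val_inj e'.
  rewrite /newBv; case: ifP; case: ifP => h1 h2; lia.
- have hb' := hb erefl; rewrite /newBv /=.
  repeat (case: ifP => ?); lia.
- have hb' := hb erefl; rewrite /newBv /=.
  repeat (case: ifP => ?); lia.
Qed.

Lemma hs_goal (u1 : 'I_(ar_n C (tdom C LHS))) (u2 : 'I_(ar_n C (tdom C RHS))) :
  val u1 = val u2 -> val (tsig C LHS u1) = val (tsig C RHS u2).
Proof.
move=> /(decomp _ _ _ _ _ _ _ _ _ _ hQdom) [u [w [k [v [-> [-> hv]]]]]].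
rewrite /= /hsig !smap_Rank.
rewrite (blk_map_val _ _ _ _ _ _ _ _ _ _ (newBv j (tsig C chi u) ((tn C psi).-1 + tn C phi))) //.
rewrite (blk_map_val _ _ _ _ _ _ _ _ _ _
   (newBv (inA j i) (tsig C (hcomp C psi chi j) (tagnat.Rank u w)) (tn C phi))) //.
have eq := q_Rank C L H K F G _ _ _ (fun x => hsig C psi chi j x == inA j i) hQdom u w.
apply: etrans.
  apply: (SB _ _ v w (cast_ord eq k) (tsig C chi u)).
    by move=> hf e; move/negP: (negbT hf); apply; apply/eqP; exact: val_inj e.
  by rewrite hv (S_qb C L H K F G _ _ _ (fun x => hsig C psi chi j x == inA j i) hQdom).
apply: esym; apply: nmap_eq => //.
- exact: hQdom.
- by rewrite /= sar_Rank.
- move=> _; congr newBv.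
  rewrite /= /hsig smap_Rank (blk_map_val _ _ _ _ _ _ _ _ _ _ (newBv j (tsig C chi u) (tn C psi))) //.
Qed.

Lemma SBt c g (v : 'I_(blk_k C Kd Hd c g)) (w : 'I_(blk_k C K H c g))
  (k : 'I_(qb C K H G F Qt Qs c g w)) (b : nat) :
  (c = false -> b <> j) ->
  (v : nat) = (\sum_(w' < blk_k C K H c g | (w' < w)%N) qb C K H G F Qt Qs c g w' + k)%N ->
  nmap C Kd Hd (fun a => inA j (ttau C (hcomp C phi psi i) a) : nat)
    (fun a => inA j (tsig C (hcomp C phi psi i) a) : nat)
    (newBv j b ((tn C psi).-1 + tn C phi)) c g v =
  nmap C G F (fun a => inA (inA j i) (ttau C phi a) : nat)
    (fun a => inA (inA j i) (tsig C phi a) : nat)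
    (newBv (inA j i) (nmap C K H (fun a => inA j (ttau C psi a) : nat)
        (fun a => inA j (tsig C psi a) : nat) (newBv j b (tn C psi)) c g w) (tn C phi))
    (blkQ C K H Qt Qs c g w) (blk_ar C K H c g w) k.
Proof.
have hi := ltn_ord i.
case: c v w k; case: g => /= v w k hb hv.
- have -> : v = tagnat.Rank w k by apply: ordP; rewrite hv Rank_tt.
  rewrite /htau smap_Rank (blk_map_val _ _ _ _ _ _ _ _ _ _ (newBv i (ttau C psi w) (tn C phi))) //.
  apply: nmap_shift => [a|a|hq] /=; rewrite ?addnA //.
  have hq' : (ttau C psi w : nat) <> i.
    by move=> e; move/negP: (negbT hq); apply; apply/eqP; exact: val_inj e.
  rewrite /newBv; case: ifP; case: ifP => h1 h2; lia.
- have e := flip_k C G F (tsig C psi w == i) (ar C H w).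
  have -> : v = tagnat.Rank w (cast_ord (esym e) k) by apply: ordP; rewrite hv (Rank_tf C K H G F Qt Qs).
  rewrite /hsig smap_Rank (blk_map_val _ _ _ _ _ _ _ _ _ _ (newBv i (tsig C psi w) (tn C phi))) //.
  rewrite (nmap_flip _ _ _ _ _ _ _ _ _ k) //.
  apply: nmap_shift => [a|a|hq] /=; rewrite ?addnA //.
  have hq' : (tsig C psi w : nat) <> i.
    by move=> e'; move/negP: (negbT hq); apply; apply/eqP; exact: val_inj e'.
  rewrite /newBv; case: ifP; case: ifP => h1 h2; lia.
- have hb' := hb erefl; rewrite /newBv /=.
  repeat (case: ifP => ?); lia.
- have hb' := hb erefl; rewrite /newBv /=.
  repeat (case: ifP => ?); lia.
Qed.

Lemma ht_goal (u1 : 'I_(ar_n C (tcod C LHS))) (u2 : 'I_(ar_n C (tcod C RHS))) :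
  val u1 = val u2 -> val (ttau C LHS u1) = val (ttau C RHS u2).
Proof.
move=> /(decomp _ _ _ _ _ _ _ _ _ _ hQcod) [u [w [k [v [-> [-> hv]]]]]].
rewrite /= /htau !smap_Rank.
rewrite (blk_map_val _ _ _ _ _ _ _ _ _ _ (newBv j (ttau C chi u) ((tn C psi).-1 + tn C phi))) //.
rewrite (blk_map_val _ _ _ _ _ _ _ _ _ _
   (newBv (inA j i) (ttau C (hcomp C psi chi j) (tagnat.Rank u w)) (tn C phi))) //.
have eq := q_Rank C M K H G F _ _ _ (fun x => htau C psi chi j x == inA j i) hQcod u w.
apply: etrans.
  apply: (SBt _ _ v w (cast_ord eq k) (ttau C chi u)).
    by move=> hf e; move/negP: (negbT hf); apply; apply/eqP; exact: val_inj e.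
  by rewrite hv (S_qb C M K H G F _ _ _ (fun x => htau C psi chi j x == inA j i) hQcod).
apply: esym; apply: nmap_eq => //.
- exact: hQcod.
- by rewrite /= sar_Rank.
- move=> _; congr newBv.
  rewrite /= /htau smap_Rank (blk_map_val _ _ _ _ _ _ _ _ _ _ (newBv j (ttau C chi u) (tn C psi))) //.
Qed.

End Main.


Section MtupComp.
Variable C : category.

Lemma mtup_comp (X : mfun C) (fX : is_functor C X) {n} (sg : 'I_(ar_n C X) -> 'I_n)
  (A : 'I_n -> Ob C) (i : 'I_n) (p1 p2 p3 : bool -> Ob C)
  (g1n : Hom (p2 false) (p1 false)) (g1p : Hom (p1 true) (p2 true))
  (g2n : Hom (p3 false) (p2 false)) (g2p : Hom (p2 true) (p3 true)) :
  comp (fm C X (mtup C (ar C X) sg A i p2 p3 g2n g2p)) (fm C X (mtup C (ar C X) sg A i p1 p2 g1n g1p)) =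
  fm C X (mtup C (ar C X) sg A i p1 p3 (comp g1n g2n) (comp g2p g1p)).
Proof.
case: fX => _ fc; rewrite -fc; congr (fm C X _).
apply: functional_extensionality_dep => u; rewrite /mtup /obs.
case: (sg u == i) => //; case: (ar C X u) => //=; exact: comp_id_l.
Qed.

Lemma UH_mtup {k n} (al : 'I_k -> bool) (sg : 'I_k -> 'I_n) (A : 'I_n -> Ob C) (i : 'I_n)
  (p1 p2 : bool -> Ob C) (fn : Hom (p2 false) (p1 false)) (fp : Hom (p1 true) (p2 true)) u :
  UH C (mtup C al sg A i p1 p2 fn fp u) =
  if sg u == i then (if al u then HP C fp else HP C fn) else HP C (idm (A (sg u))).
Proof.
rewrite /mtup /obs; case: (sg u == i) => //; case: (al u) => //=.
Qed.

End MtupComp.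

Section FormSec.
Variables (C : category) (T : trans C) (j : 'I_(tn C T)).
Hypotheses (fL : is_functor C (tdom C T)) (fM : is_functor C (tcod C T))
  (dT : dinatural_in C T j).
Local Notation L := (tdom C T).
Local Notation M := (tcod C T).
Local Notation s3 := (tsig C T).
Local Notation t3 := (ttau C T).

Definition Form (A : 'I_(tn C T) -> Ob C) (D E H : Ob C) (h : Hom D H) (k : Hom H E) :
  Hom (fo C L (obs C (ar C L) s3 A j (pc C E D))) (fo C M (obs C (ar C M) t3 A j (pc C D E))) :=
  comp (fm C M (mtup C (ar C M) t3 A j (fun _ => H) (pc C D E) h k))
   (comp (tcomp C T (subst1 C A j H))
         (fm C L (mtup C (ar C L) s3 A j (pc C E D) (fun _ => H) k h))).

Lemma FL1_exact A D E H (h : Hom D H) (k : Hom H E) :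
  comp (fm C M (mtup C (ar C M) t3 A j (fun _ => D) (pc C D E) (idm D) (comp k h)))
   (comp (tcomp C T (subst1 C A j D))
     (fm C L (mtup C (ar C L) s3 A j (pc C E D) (fun _ => D) (comp k h) (idm D)))) =
  Form A D E H h k.
Proof.
have eM := mtup_comp C M fM t3 A j (fun _ => D) (pc C D H) (pc C D E) (idm D) h (idm D) k.
rewrite comp_id_l in eM; rewrite -eM {eM}.
have eL := mtup_comp C L fL s3 A j (pc C E D) (pc C H D) (fun _ => D) k (idm D) h (idm D).
rewrite comp_id_l in eL; rewrite -eL {eL}.
set Mk := fm C M (mtup C (ar C M) t3 A j (pc C D H) (pc C D E) (idm D) k).
set Lk := fm C L (mtup C (ar C L) s3 A j (pc C E D) (pc C H D) k (idm D)).
set Mh := fm C M (mtup C (ar C M) t3 A j (fun _ => D) (pc C D H) (idm D) h).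
set Lh := fm C L (mtup C (ar C L) s3 A j (pc C H D) (fun _ => D) h (idm D)).
transitivity (comp Mk (comp (comp Mh (comp (tcomp C T (subst1 C A j D)) Lh)) Lk)).
  by rewrite !comp_assoc.
rewrite /Mh /Lh (dT A D H h).
transitivity (comp (comp Mk (fm C M (mtup C (ar C M) t3 A j (fun _ => H) (pc C D H) h (idm H))))
   (comp (tcomp C T (subst1 C A j H))
     (comp (fm C L (mtup C (ar C L) s3 A j (pc C H D) (fun _ => H) (idm H) h)) Lk))).
  by rewrite !comp_assoc.
rewrite /Mk /Lk !mtup_comp // !comp_id_r //.
Qed.


Lemma FL2_exact A D E H K' (hf : Hom D H) (kf : Hom K' E) (ps : Hom H K') :
  comp (fm C M (mtup C (ar C M) t3 A j (pc C H K') (pc C D E) hf kf))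
   (comp (comp (fm C M (mtup C (ar C M) t3 A j (fun _ => H) (pc C H K') (idm H) ps))
           (comp (tcomp C T (subst1 C A j H))
                 (fm C L (mtup C (ar C L) s3 A j (pc C K' H) (fun _ => H) ps (idm H)))))
         (fm C L (mtup C (ar C L) s3 A j (pc C E D) (pc C K' H) kf hf))) =
  Form A D E H hf (comp kf ps).
Proof.
set X1 := fm C M (mtup C (ar C M) t3 A j (pc C H K') (pc C D E) hf kf).
set Y1 := fm C M (mtup C (ar C M) t3 A j (fun _ => H) (pc C H K') (idm H) ps).
set Z1 := fm C L (mtup C (ar C L) s3 A j (pc C K' H) (fun _ => H) ps (idm H)).
set X2 := fm C L (mtup C (ar C L) s3 A j (pc C E D) (pc C K' H) kf hf).
transitivity (comp (comp X1 Y1) (comp (tcomp C T (subst1 C A j H)) (comp Z1 X2))).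
  by rewrite !comp_assoc.
rewrite /X1 /Y1 /Z1 /X2 !mtup_comp // !comp_id_l //.
Qed.

Lemma FL1 A D E (Ps : Hom D E) D0 E0 H (h : Hom D0 H) (k : Hom H E0) :
  HP C Ps = HP C (comp k h) ->
  HP C (comp (fm C M (mtup C (ar C M) t3 A j (fun _ => D) (pc C D E) (idm D) Ps))
   (comp (tcomp C T (subst1 C A j D))
     (fm C L (mtup C (ar C L) s3 A j (pc C E D) (fun _ => D) Ps (idm D))))) =
  HP C (Form A D0 E0 H h k).
Proof.
move=> e; case: (HP_ends C e) => e1 e2; subst D0 E0.
by rewrite (HP_inj C _ _ e) FL1_exact.
Qed.

Lemma FL2 A D E H K' (hf : Hom D H) (kf : Hom K' E) (ps : Hom H K')
  a1 b1 a2 a3 (X1 : Hom a1 b1) (Xi : Hom a2 a1) (X2 : Hom a3 a2) :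
  HP C X1 = HP C (fm C M (mtup C (ar C M) t3 A j (pc C H K') (pc C D E) hf kf)) ->
  HP C Xi = HP C (comp (fm C M (mtup C (ar C M) t3 A j (fun _ => H) (pc C H K') (idm H) ps))
           (comp (tcomp C T (subst1 C A j H))
                 (fm C L (mtup C (ar C L) s3 A j (pc C K' H) (fun _ => H) ps (idm H))))) ->
  HP C X2 = HP C (fm C L (mtup C (ar C L) s3 A j (pc C E D) (pc C K' H) kf hf)) ->
  HP C (comp X1 (comp Xi X2)) = HP C (Form A D E H hf (comp kf ps)).
Proof.
move=> h1 h2 h3; rewrite -FL2_exact; apply: HP_comp => //; exact: HP_comp.
Qed.

Lemma Form_congr A A' D E H (h : Hom D H) (k : Hom H E) D' E' H' (h' : Hom D' H') (k' : Hom H' E') :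
  (forall c, c != j -> A c = A' c) -> HP C h = HP C h' -> HP C k = HP C k' ->
  HP C (Form A D E H h k) = HP C (Form A' D' E' H' h' k').
Proof.
move=> hA eh ek; case: (HP_ends C eh) => e1 e2; subst D' H'.
case: (HP_ends C ek) => _ e3; subst E'.
rewrite -(HP_inj C _ _ eh) -(HP_inj C _ _ ek) {eh ek h' k'}.
have hs : subst1 C A j H = subst1 C A' j H.
  apply: functional_extensionality => v; rewrite /subst1.
  by case: eqP => // /eqP hv; apply: hA.
rewrite /Form; apply: HP_comp; first apply: HP_comp.
- apply: fm_UH => u; rewrite !UH_mtup.
  by case Ee: (s3 u == j) => //; rewrite hA // Ee.
- have HT : forall A1 A2, A1 = A2 -> HP C (tcomp C T A1) = HP C (tcomp C T A2) by move=> ? ? ->.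
  exact: HT.
- apply: fm_UH => u; rewrite !UH_mtup.
  by case Ee: (t3 u == j) => //; rewrite hA // Ee.
Qed.

End FormSec.


Lemma hO_false C phi psi i V b (h : (b == i) = false) :
  hO C phi psi i V b = V (newB (tn C phi) (negbT h)).
Proof.
have gen : forall c (e : (b == i) = c),
  (if c as c0 return ((b == i) = c0 -> Ob C) then fun _ => hFv C phi psi i V
   else fun h0 => V (newB (tn C phi) (negbT h0))) e = V (newB (tn C phi) (negbT h)).
  case=> e; first by exfalso; move: h; rewrite e.
  by congr V; apply: val_inj.
exact: gen.
Qed.

Lemma hO_true C phi psi i V : hO C phi psi i V i = hFv C phi psi i V.
Proof.
have gen : forall c (e : (i == i) = c),
  (if c as c0 return ((i == i) = c0 -> Ob C) then fun _ => hFv C phi psi i V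
   else fun h0 => V (newB (tn C phi) (negbT h0))) e = hFv C phi psi i V.
  by case=> e //; exfalso; move: e; rewrite eqxx.
exact: gen.
Qed.

Lemma subst1_false C {n} (A : 'I_n -> Ob C) i a v : v != i -> subst1 C A i a v = A v.
Proof. by rewrite /subst1 => /negbTE ->. Qed.

Lemma subst1_true C {n} (A : 'I_n -> Ob C) i a : subst1 C A i a i = a.
Proof. by rewrite /subst1 eqxx. Qed.

Lemma fm_fsubst C H P Fp Fn X Y (f : forall t, vhom C (sar C H P Fp Fn t) (X t) (Y t)) :
  fm C (fsubst C H P Fp Fn) f =
  fm C H (fun u => blk_mor C Fp Fn (P u) (ar C H u)
    (fun v => vcast C (sar_Rank C H P Fp Fn u v) (f (tagnat.Rank u v)))).
Proof. by []. Qed.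

Lemma HP_fm_fsubst C H P Fp Fn X Y (f : forall t, vhom C (sar C H P Fp Fn t) (X t) (Y t)) :
  HP C (fm C (fsubst C H P Fp Fn) f) =
  HP C (fm C H (fun u => blk_mor C Fp Fn (P u) (ar C H u)
    (fun v => vcast C (sar_Rank C H P Fp Fn u v) (f (tagnat.Rank u v))))).
Proof. by []. Qed.

Lemma HP_tcomp_eq C (T : trans C) A A' : A = A' -> HP C (tcomp C T A) = HP C (tcomp C T A').
Proof. by move=> ->. Qed.

Section Comp.
Variables (C : category) (phi psi chi : trans C) (i : 'I_(tn C psi)) (j : 'I_(tn C chi)).
Local Notation F := (tdom C phi).
Local Notation G := (tcod C phi).
Local Notation H := (tdom C psi).
Local Notation K := (tcod C psi).
Local Notation L := (tdom C chi).
Local Notation M := (tcod C chi).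
Local Notation Psi := (hcomp C phi psi i).
Local Notation Xi := (hcomp C psi chi j).
Local Notation ji := (inA j i).
Local Notation LHS := (hcomp C Psi chi j).
Local Notation RHS := (hcomp C phi Xi ji).

Variables (A1 : 'I_(tn C LHS) -> Ob C) (A2 : 'I_(tn C RHS) -> Ob C).
Hypothesis hA12 : forall a1 a2, val a1 = val a2 -> A1 a1 = A2 a2.

Local Notation V1 := (hA C Psi chi j A1).
Local Notation hA1 := (hA C phi psi i V1).
Local Notation F1 := (hFv C phi psi i V1).
Local Notation G1 := (hGv C phi psi i V1).
Local Notation hO1 := (hO C phi psi i V1).
Local Notation hOL := (hO C Psi chi j A1).
Local Notation hA2 := (hA C phi Xi ji A2).
Local Notation F2 := (hFv C phi Xi ji A2).
Local Notation G2 := (hGv C phi Xi ji A2).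
Local Notation hOR := (hO C phi Xi ji A2).
Local Notation U := (subst1 C hOR ji F2).
Local Notation hA3 := (hA C psi chi j U).
Local Notation hO3 := (hO C psi chi j U).

Lemma E_hA : hA1 = hA2.
Proof. apply: functional_extensionality => a; apply: hA12 => /=; lia. Qed.

Lemma E_F : F1 = F2.
Proof. by rewrite /hFv E_hA. Qed.

Lemma E_G : G1 = G2.
Proof. by rewrite /hGv E_hA. Qed.

Lemma E_phi : HP C (tcomp C phi hA1) = HP C (tcomp C phi hA2).
Proof. by rewrite E_hA. Qed.

Lemma hA3_i : hA3 i = F2.
Proof. by rewrite /hA subst1_true. Qed.

Lemma hO1_off b : b != i -> hO1 b = hA3 b.
Proof.
move=> hb; have h' : (inA j b == ji) = false by rewrite inA_eq2 (negbTE hb).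
rewrite (hO_false _ _ _ _ _ _ (negbTE hb)) /hA subst1_false ?h' //.
rewrite (hO_false C phi Xi ji A2 (inA j b) h'); apply: hA12 => /=.
have hbi : (b : nat) <> i by move=> e; move/negP: hb; apply; apply/eqP; exact: val_inj e.
case: ifP; case: ifP => h1 h2; lia.
Qed.

Lemma E_sub : subst1 C hO1 i F1 = hA3.
Proof.
apply: functional_extensionality => v; case: (eqVneq v i) => [->|hv].
  by rewrite subst1_true hA3_i E_F.
by rewrite subst1_false // hO1_off.
Qed.

Lemma hOL_off c : c != j -> hOL c = hO3 c.
Proof.
move=> hc; rewrite (hO_false _ _ _ _ _ _ (negbTE hc)) (hO_false _ _ _ _ _ _ (negbTE hc)).
have h' := newB_ne C psi chi i j c (negbTE hc).
rewrite (subst1_false C _ _ _ _ h') (hO_false C phi Xi ji A2 _ (negbTE h')).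
apply: hA12 => /=.
have hcj : (c : nat) <> j by move=> e; apply: (negP hc); apply/eqP; exact: val_inj e.
have := ltn_ord i; repeat (case: ifP => ?); lia.
Qed.


Lemma hA3_off b : b != i -> hA3 b = hOR (inA j b).
Proof. by move=> hb; rewrite /hA subst1_false // inA_eq2. Qed.

Lemma hO3_off c (h : (c == j) = false) :
  hO3 c = hOR (newB (tn C psi) (negbT h)).
Proof.
rewrite (hO_false _ _ _ _ _ _ h) subst1_false //.
exact: newB_ne.
Qed.

Section X1.
Variables (p1 p2 : bool -> Ob C) (hf : Hom (p2 false) (p1 false)) (kf : Hom (p1 true) (p2 true)).
Hypothesis eh : HP C hf = HP C (fm C H (mtup C (ar C H) (tsig C psi) hA3 i (pc C G2 F2)
                  (fun _ => F2) (tcomp C phi hA2) (idm F2))).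
Hypothesis ek : HP C kf = HP C (fm C K (mtup C (ar C K) (ttau C psi) hA3 i (fun _ => F2)
                  (pc C F2 G2) (idm F2) (tcomp C phi hA2))).

Lemma X1blk c g (mo : c = false -> 'I_(tn C Xi)) a Xa Ya
  (fb : forall w, vhom C (blk_ar C K H c g w) (Xa w) (Ya w)) :
  (forall w, UH C (fb w) =
     let x := blk_map C K H _ (fun v => inA j (ttau C psi v)) (fun v => inA j (tsig C psi v)) c g mo w in
     if x == ji then (if blk_ar C K H c g w then HP C (tcomp C phi hA2) else HP C (idm F2))
     else HP C (idm (hOR x))) ->
  (forall h, mo h != ji) -> (forall h, hOR (mo h) = a) ->
  UH C (blk_mor C K H c g fb) = if c then (if g then HP C kf else HP C hf) else HP C (idm a).
Proof.
move: mo Xa Ya fb; case: c; case: g => /= mo Xa Ya fb hfb hmo ha.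
- rewrite ek; apply: fm_UH => v; rewrite hfb UH_mtup /= inA_eq2.
  by case E: (ttau C psi v == i) => //; rewrite hA3_off ?E.
- rewrite eh; apply: fm_UH => v; rewrite UH_vflip hfb UH_mtup /= inA_eq2.
  case E: (tsig C psi v == i); last by rewrite hA3_off ?E.
  by case: (ar C H v).
- by move: (hfb ord0) => /= ->; rewrite (negbTE (hmo erefl)) ha.
- by move: (hfb ord0) => /= ->; rewrite (negbTE (hmo erefl)) ha.
Qed.

Lemma X1L :
  HP C (fm C (tcod C Xi) (mtup C (ar C (tcod C Xi)) (ttau C Xi) hOR ji (fun _ => F2)
          (pc C F2 G2) (idm F2) (tcomp C phi hA2))) =
  HP C (fm C M (mtup C (ar C M) (ttau C chi) hO3 j p1 p2 hf kf)).
Proof.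
rewrite HP_fm_fsubst; apply: fm_UH => u; rewrite UH_mtup.
apply: (X1blk _ _ (fun h => newB (tn C psi) (negbT h)) (hO3 (ttau C chi u))).
- move=> w; rewrite UH_vcast UH_mtup /= /htau smap_Rank sar_Rank //.
- move=> h; exact: newB_ne.
- by move=> h; rewrite hO3_off.
Qed.

End X1.


Section X2.
Variables (p1 p2 : bool -> Ob C) (kf : Hom (p2 false) (p1 false)) (hf : Hom (p1 true) (p2 true)).
Hypothesis eh : HP C hf = HP C (fm C H (mtup C (ar C H) (tsig C psi) hA3 i (pc C G2 F2)
                  (fun _ => F2) (tcomp C phi hA2) (idm F2))).
Hypothesis ek : HP C kf = HP C (fm C K (mtup C (ar C K) (ttau C psi) hA3 i (fun _ => F2)
                  (pc C F2 G2) (idm F2) (tcomp C phi hA2))).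

Lemma X2blk c g (mo : c = false -> 'I_(tn C Xi)) a Xa Ya
  (fb : forall w, vhom C (blk_ar C H K c g w) (Xa w) (Ya w)) :
  (forall w, UH C (fb w) =
     let x := blk_map C H K _ (fun v => inA j (tsig C psi v)) (fun v => inA j (ttau C psi v)) c g mo w in
     if x == ji then (if blk_ar C H K c g w then HP C (idm F2) else HP C (tcomp C phi hA2))
     else HP C (idm (hOR x))) ->
  (forall h, mo h != ji) -> (forall h, hOR (mo h) = a) ->
  UH C (blk_mor C H K c g fb) = if c then (if g then HP C hf else HP C kf) else HP C (idm a).
Proof.
move: mo Xa Ya fb; case: c; case: g => /= mo Xa Ya fb hfb hmo ha.
- rewrite eh; apply: fm_UH => v; rewrite hfb UH_mtup /= inA_eq2.
  by case E: (tsig C psi v == i) => //; rewrite hA3_off ?E.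
- rewrite ek; apply: fm_UH => v; rewrite UH_vflip hfb UH_mtup /= inA_eq2.
  case E: (ttau C psi v == i); last by rewrite hA3_off ?E.
  by case: (ar C K v).
- by move: (hfb ord0) => /= ->; rewrite (negbTE (hmo erefl)) ha.
- by move: (hfb ord0) => /= ->; rewrite (negbTE (hmo erefl)) ha.
Qed.

Lemma X2L :
  HP C (fm C (tdom C Xi) (mtup C (ar C (tdom C Xi)) (tsig C Xi) hOR ji (pc C G2 F2) (fun _ => F2)
          (tcomp C phi hA2) (idm F2))) =
  HP C (fm C L (mtup C (ar C L) (tsig C chi) hO3 j p1 p2 kf hf)).
Proof.
rewrite HP_fm_fsubst; apply: fm_UH => u; rewrite UH_mtup.
apply: (X2blk _ _ (fun h => newB (tn C psi) (negbT h)) (hO3 (tsig C chi u))).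
- move=> w; rewrite UH_vcast UH_mtup /= /hsig smap_Rank sar_Rank //.
- move=> h; exact: newB_ne.
- by move=> h; rewrite hO3_off.
Qed.

End X2.

Lemma hc_goal (fL : is_functor C L) (fM : is_functor C M) (dchi : dinatural C chi) :
  HP C (tcomp C LHS A1) = HP C (tcomp C RHS A2).
Proof.
rewrite /= /hcomp_comp !HP_castHom /hraw.
pose Hp1 := fm C H (mtup C (ar C H) (tsig C psi) hO1 i (pc C G1 F1) (fun _ => F1)
              (tcomp C phi hA1) (idm F1)).
pose Kp1 := fm C K (mtup C (ar C K) (ttau C psi) hO1 i (fun _ => F1) (pc C F1 G1)
              (idm F1) (tcomp C phi hA1)).
pose ps1 := tcomp C psi (subst1 C hO1 i F1).
pose hp := fm C H (mtup C (ar C H) (tsig C psi) hA3 i (pc C G2 F2) (fun _ => F2)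
              (tcomp C phi hA2) (idm F2)).
pose kp := fm C K (mtup C (ar C K) (ttau C psi) hA3 i (fun _ => F2) (pc C F2 G2)
              (idm F2) (tcomp C phi hA2)).
have eH3 : fo C H (obs C (ar C H) (tsig C psi) hA3 i (fun _ => F2)) = hFv C psi chi j U.
  congr (fo _ _ _); apply: functional_extensionality => x; rewrite /obs.
  by case: eqP => [->|] //; rewrite hA3_i.
have eK3 : fo C K (obs C (ar C K) (ttau C psi) hA3 i (fun _ => F2)) = hGv C psi chi j U.
  congr (fo _ _ _); apply: functional_extensionality => x; rewrite /obs.
  by case: eqP => [->|] //; rewrite hA3_i.
pose hf := castHom C erefl eH3 hp.
pose kf := castHom C eK3 erefl kp.
have ehf : HP C hf = HP C hp by rewrite HP_castHom.
have ekf : HP C kf = HP C kp by rewrite HP_castHom.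
apply: etrans.
  apply: (FL1 C chi j fL fM (dchi j) _ _ _ _ _ _ _ Hp1 (comp Kp1 ps1)).
  by rewrite /= /hcomp_comp HP_castHom /hraw comp_assoc.
apply: etrans.
  apply: (Form_congr C chi j _ hO3 _ _ _ _ _ _ _ _ hf (comp kf (tcomp C psi hA3))).
  - exact: hOL_off.
  - rewrite ehf; apply: fm_UH => u; rewrite !UH_mtup.
    case E: (tsig C psi u == i); last by rewrite hO1_off ?E.
    by case: (ar C H u); rewrite ?E_F ?E_phi.
  - apply: HP_comp; first by apply: HP_tcomp_eq; exact: E_sub.
    rewrite ekf; apply: fm_UH => u; rewrite !UH_mtup.
    case E: (ttau C psi u == i); last by rewrite hO1_off ?E.
    by case: (ar C K u); rewrite ?E_F ?E_phi.
apply: esym; apply: (FL2 C chi j fL fM).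
- by apply: X1L.
- by rewrite /= /hcomp_comp HP_castHom /hraw.
- by apply: X2L.
Qed.

End Comp.


Theorem mainTheorem14 (C : category) (phi psi chi : trans C)
    (i : 'I_(tn C psi)) (j : 'I_(tn C chi)) :
  is_functor C (tdom C phi) -> is_functor C (tcod C phi) ->
  is_functor C (tdom C psi) -> is_functor C (tcod C psi) ->
  is_functor C (tdom C chi) -> is_functor C (tcod C chi) ->
  dinatural C phi -> dinatural C psi -> dinatural C chi ->
  hcomp C (hcomp C phi psi i) chi j = hcomp C phi (hcomp C psi chi j) (inA j i).
Proof.
move=> _ _ _ _ fL fM _ _ dchi.
apply: (trans_ext C _ _ (dom_eq C phi psi chi i j) (cod_eq C phi psi chi i j) (tn_eq C phi psi chi i j)).
- exact: hs_goal.
- exact: ht_goal.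
- move=> A1 A2 hA; exact: hc_goal.
Qed.
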